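(* Let $\Sigma$ be a set of $\mathscr{L}$-sentences that is closed under $K$ (i.e. $K\phi\in\Sigma$ whenever $\phi\in\Sigma$) and that contains all instances of the schemata $E1$ and $E2$. Then $\mathcal{M}_\Sigma$ satisfies all instances of $E4$, i.e. the universal closure of $K\phi\rightarrow KK\phi$ for every $\mathscr{L}$-formula $\phi$.
   Context: $\mathscr{L}$ is the language of Peano arithmetic (variables, constant $0$, unary $S$, binary $+$, $\cdot$) extended by a unary modal operator $K$: whenever $\phi$ is a formula, $K\phi$ is a formula (called purely modal). An $\mathscr{L}$-structure consists of a first-order structure for the arithmetic part together with a truth value for each purely modal formula $K\phi$ and each assignment $s$ of the variables, subject to: (a) independence from $s(x)$ for $x$ not free in $\phi$; (b) invariance under alphabetic variants of $\phi$; (c) $\mathcal{M}\models K\phi(x|y)[s]$ iff $\mathcal{M}\models K\phi[s(x|s(y))]$ when $y$ is substitutable for $x$ in $\phi$. Satisfaction is extended inductively to all formulas. For a set $\Sigma$ of sentences, $\Sigma\models\phi$ means every $\mathscr{L}$-structure satisfying all members of $\Sigma$ satisfies $\phi$ under all assignments; $\phi$ is valid if $\emptyset\models\phi$. For a formula $\phi$ and an assignment $s$ into $\mathbb{N}$, $\phi^s$ is the sentence obtained by replacing each free variable $x$ of $\phi$ by the numeral $\overline{s(x)}$. $\mathcal{M}_\Sigma$ is the $\mathscr{L}$-structure with universe $\mathbb{N}$, arithmetic symbols interpreted as usual, and $\mathcal{M}_\Sigma\models K\phi[s]$ iff $\Sigma\models\phi^s$. Schema $E1$: the universal closure of $K\phi$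 whenever $\phi$ is valid. Schema $E2$: the universal closure of $K(\phi\rightarrow\psi)\rightarrow K\phi\rightarrow K\psi$, where $A\rightarrow B\rightarrow C$ abbreviates $A\rightarrow(B\rightarrow C)$. *)

(* Defs.v *)
From Stdlib Require Import List Arith.
Import ListNotations.

Inductive term : Type :=
| Var : nat -> term
| Zero : term
| Succ : term -> term
| Plus : term -> term -> term
| Times : term -> term -> term.

(** Enderton-style primitives: =, ¬, →, ∀, plus the modal K. *)
Inductive formula : Type :=
| Eq : term -> term -> formula
| Neg : formula -> formula
| Imp : formula -> formula -> formula
| All : nat -> formula -> formula
| K : formula -> formula.

Fixpoint occurs_term (x : nat) (t : term) : bool :=
  match t with
  | Var y => Nat.eqb x y
  | Zero => false
  | Succ t1 => occurs_term x t1
  | Plus t1 t2 | Times t1 t2 => occurs_term x t1 || occurs_term x t2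
  end.

Fixpoint freeb (x : nat) (phi : formula) : bool :=
  match phi with
  | Eq t1 t2 => occurs_term x t1 || occurs_term x t2
  | Neg p => freeb x p
  | Imp p q => freeb x p || freeb x q
  | All y p => negb (Nat.eqb x y) && freeb x p
  | K p => freeb x p
  end.

Definition sentence (phi : formula) : Prop := forall x, freeb x phi = false.

Fixpoint max_var_term (t : term) : nat :=
  match t with
  | Var y => y
  | Zero => 0
  | Succ t1 => max_var_term t1
  | Plus t1 t2 | Times t1 t2 => Nat.max (max_var_term t1) (max_var_term t2)
  end.

Fixpoint max_var (phi : formula) : nat :=
  match phi with
  | Eq t1 t2 => Nat.max (max_var_term t1) (max_var_term t2)
  | Neg p => max_var p
  | Imp p q => Nat.max (max_var p) (max_var q)
  | All y p => Nat.max y (max_var p)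
  | K p => max_var p
  end.

Definition free_vars (phi : formula) : list nat :=
  filter (fun x => freeb x phi) (seq 0 (S (max_var phi))).

Definition closure (phi : formula) : formula :=
  fold_right All phi (free_vars phi).

Fixpoint tsubst (sg : nat -> term) (t : term) : term :=
  match t with
  | Var y => sg y
  | Zero => Zero
  | Succ t1 => Succ (tsubst sg t1)
  | Plus t1 t2 => Plus (tsubst sg t1) (tsubst sg t2)
  | Times t1 t2 => Times (tsubst sg t1) (tsubst sg t2)
  end.

Definition shield (sg : nat -> term) (y : nat) : nat -> term :=
  fun v => if Nat.eqb v y then Var v else sg v.

Fixpoint psubst (sg : nat -> term) (phi : formula) : formula :=
  match phi with
  | Eq t1 t2 => Eq (tsubst sg t1) (tsubst sg t2)
  | Neg p => Neg (psubst sg p)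
  | Imp p q => Imp (psubst sg p) (psubst sg q)
  | All y p => All y (psubst (shield sg y) p)
  | K p => K (psubst sg p)
  end.

Definition subst1 (x : nat) (t : term) (phi : formula) : formula :=
  psubst (fun v => if Nat.eqb v x then t else Var v) phi.

Fixpoint substitutable (t : term) (x : nat) (phi : formula) : Prop :=
  match phi with
  | Eq _ _ => True
  | Neg p => substitutable t x p
  | Imp p q => substitutable t x p /\ substitutable t x q
  | All y p => freeb x (All y p) = false \/
               (occurs_term y t = false /\ substitutable t x p)
  | K p => substitutable t x p
  end.

(** Alphabetic variants (alpha-equivalence), via a context of paired bound variables. *)
Fixpoint var_rel (ctx : list (nat * nat)) (x y : nat) : Prop :=
  match ctx with
  | [] => x = y
  | (a, b) :: c => (a = x /\ b = y) \/ (a <> x /\ b <> y /\ var_rel c x y)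
  end.

Fixpoint term_aeq (ctx : list (nat * nat)) (t u : term) : Prop :=
  match t, u with
  | Var x, Var y => var_rel ctx x y
  | Zero, Zero => True
  | Succ t1, Succ u1 => term_aeq ctx t1 u1
  | Plus t1 t2, Plus u1 u2 => term_aeq ctx t1 u1 /\ term_aeq ctx t2 u2
  | Times t1 t2, Times u1 u2 => term_aeq ctx t1 u1 /\ term_aeq ctx t2 u2
  | _, _ => False
  end.

Fixpoint aeq (ctx : list (nat * nat)) (phi psi : formula) : Prop :=
  match phi, psi with
  | Eq t1 t2, Eq u1 u2 => term_aeq ctx t1 u1 /\ term_aeq ctx t2 u2
  | Neg p, Neg q => aeq ctx p q
  | Imp p1 p2, Imp q1 q2 => aeq ctx p1 q1 /\ aeq ctx p2 q2
  | All x p, All y q => aeq ((x, y) :: ctx) p q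
  | K p, K q => aeq ctx p q
  | _, _ => False
  end.

Definition alphabetic_variant (phi psi : formula) : Prop := aeq [] phi psi.

Record prestructure : Type := {
  dom : Type;
  i_zero : dom;
  i_succ : dom -> dom;
  i_plus : dom -> dom -> dom;
  i_times : dom -> dom -> dom;
  i_K : formula -> (nat -> dom) -> Prop
}.

Definition upd {A : Type} (s : nat -> A) (x : nat) (d : A) : nat -> A :=
  fun v => if Nat.eqb v x then d else s v.

Fixpoint eval (M : prestructure) (s : nat -> dom M) (t : term) : dom M :=
  match t with
  | Var y => s y
  | Zero => i_zero M
  | Succ t1 => i_succ M (eval M s t1)
  | Plus t1 t2 => i_plus M (eval M s t1) (eval M s t2)
  | Times t1 t2 => i_times M (eval M s t1) (eval M s t2)
  end.

Fixpoint sat (M : prestructure) (phi : formula) (s : nat -> dom M) : Prop :=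
  match phi with
  | Eq t1 t2 => eval M s t1 = eval M s t2
  | Neg p => ~ sat M p s
  | Imp p q => sat M p s -> sat M q s
  | All x p => forall d : dom M, sat M p (upd s x d)
  | K p => i_K M p s
  end.

Definition is_Lstructure (M : prestructure) : Prop :=
  (forall phi (s s' : nat -> dom M),
      (forall x, freeb x phi = true -> s x = s' x) ->
      (i_K M phi s <-> i_K M phi s')) /\
  (forall phi psi (s : nat -> dom M),
      alphabetic_variant phi psi -> (i_K M phi s <-> i_K M psi s)) /\
  (forall phi x y (s : nat -> dom M),
      substitutable (Var y) x phi ->
      (i_K M (subst1 x (Var y) phi) s <-> i_K M phi (upd s x (s y)))).

Definition conseq (Sigma : formula -> Prop) (phi : formula) : Prop :=
  forall M : prestructure, is_Lstructure M ->
    (forall sg, Sigma sg -> forall s : nat -> dom M, sat M sg s) ->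
    forall s : nat -> dom M, sat M phi s.

Definition valid (phi : formula) : Prop := conseq (fun _ => False) phi.

Definition numeral (n : nat) : term := Nat.iter n Succ Zero.

Definition inst (phi : formula) (s : nat -> nat) : formula :=
  psubst (fun x => numeral (s x)) phi.

Definition M_Sigma (Sigma : formula -> Prop) : prestructure := {|
  dom := nat;
  i_zero := 0;
  i_succ := S;
  i_plus := Nat.add;
  i_times := Nat.mul;
  i_K := fun phi s => conseq Sigma (inst phi s)
|}.

Definition E1_instances_in (Sigma : formula -> Prop) : Prop :=
  forall phi, valid phi -> Sigma (closure (K phi)).

Definition E2_instances_in (Sigma : formula -> Prop) : Prop :=
  forall phi psi, Sigma (closure (Imp (K (Imp phi psi)) (Imp (K phi) (K psi)))).

(* Main.v *)
Require Import Defs.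
From Stdlib Require Import List Arith Lia Bool.
From Stdlib Require Import Classical ClassicalEpsilon FunctionalExtensionality ProofIrrelevance PropExtensionality.
From mathcomp Require ssreflect ssrfun ssrbool eqtype boolp classical_sets filter.
Import ListNotations.

Module UltraM.
Import ssreflect ssrfun ssrbool.
Import boolp classical_sets filter.
Local Open Scope classical_set_scope.
Lemma my_ultra (X : Type) : exists U : (list X -> Prop) -> Prop,
  (forall L : list X, U (fun D => incl L D)) /\
  (forall A B : list X -> Prop, U A -> (forall x, A x -> B x) -> U B) /\
  (forall A B : list X -> Prop, U A -> U B -> U (fun x => A x /\ B x)) /\
  ~ U (fun _ => False) /\
  (forall A : list X -> Prop, U A \/ U (fun x => ~ A x)).
Proof.
pose F0 : set_system (list X) := fun A => exists L, forall D, incl L D -> A D.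
have FF : ProperFilter F0.
  apply: Build_ProperFilter_ex.
    by move=> P [L HL]; exists L; apply: HL; exact: incl_refl.
  split.
  - by exists nil => D _.
  - move=> A B [L1 H1] [L2 H2]; exists (L1 ++ L2) => D HD; split.
      by apply: H1 => x Hx; apply: HD; apply: in_or_app; left.
    by apply: H2 => x Hx; apply: HD; apply: in_or_app; right.
  - by move=> P Q PQ [L HL]; exists L => D HD; apply: PQ; apply: HL.
have [G [GU sFG]] := ultraFilterLemma FF.
exists G; split; [|split; [|split; [|split]]].
- by move=> L; apply: sFG; exists L.
- by move=> A B GA AB; apply: (filterS _ GA) => x; apply: AB.
- by move=> A B GA GB; exact: (filterI GA GB).
- have := filter_not_empty G.
  by have -> : (fun _ : list X => False) = set0 by [].
- by move=> A; exact: (in_ultra_setVsetC A GU).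
Qed.
End UltraM.
Lemma close_intro M chi : (forall s, sat M chi s) -> forall l s, sat M (fold_right All chi l) s.
Proof. intros H l; induction l as [|x l IH]; simpl; intros s; auto. Qed.

Lemma upd_same {A} (s : nat -> A) x : upd s x (s x) = s.
Proof. apply functional_extensionality; intro v; unfold upd. destruct (Nat.eqb v x) eqn:E; auto.
  apply Nat.eqb_eq in E; subst; auto. Qed.

Lemma close_elim M chi l s : sat M (fold_right All chi l) s -> sat M chi s.
Proof. revert s; induction l as [|x l IH]; simpl; intros s H; auto.
  apply IH. rewrite <- (upd_same s x). apply H. Qed.

Lemma eval_coinc M s s' t : (forall x, occurs_term x t = true -> s x = s' x) -> eval M s t = eval M s' t.
Proof.
  induction t; simpl; intros H; auto.
  - apply H. apply Nat.eqb_refl.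
  - f_equal; auto.
  - f_equal; [apply IHt1|apply IHt2]; intros x Hx; apply H; rewrite Hx; auto using orb_true_r.
  - f_equal; [apply IHt1|apply IHt2]; intros x Hx; apply H; rewrite Hx; auto using orb_true_r.
Qed.

Lemma sat_coinc M (HM : is_Lstructure M) phi : forall s s',
  (forall x, freeb x phi = true -> s x = s' x) -> (sat M phi s <-> sat M phi s').
Proof.
  induction phi; simpl; intros s s' H.
  - rewrite (eval_coinc M s s' t), (eval_coinc M s s' t0); [tauto| |];
    intros x Hx; apply H; rewrite Hx; auto using orb_true_r.
  - rewrite (IHphi s s' H); tauto.
  - rewrite (IHphi1 s s'), (IHphi2 s s'); [tauto| |];
    intros x Hx; apply H; rewrite Hx; auto using orb_true_r.
  - split; intros Hd d; [rewrite <- (IHphi (upd s n d))|rewrite (IHphi (upd s n d))]; auto;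
    intros x Hx; unfold upd; destruct (Nat.eqb x n) eqn:E; auto; apply H; rewrite E, Hx; auto.
  - destruct HM as [Ha _]. apply Ha. auto.
Qed.

Fixpoint chain (l : list formula) (psi : formula) : formula :=
  match l with [] => psi | d :: l' => Imp d (chain l' psi) end.

Lemma sat_chain M l psi s : sat M (chain l psi) s <-> ((forall d, In d l -> sat M d s) -> sat M psi s).
Proof.
  induction l as [|d l IH]; simpl.
  - split; intros H; auto. apply H; tauto.
  - rewrite IH. split; intros H.
    + intros Hd. apply H; auto.
    + intros Hd Hl. apply H. intros d' [<-|Hi]; auto.
Qed.

Lemma conseq_mono (P Q : formula -> Prop) psi : (forall f, P f -> Q f) -> conseq P psi -> conseq Q psi.
Proof. unfold conseq; intros HPQ H M HM HQ s. apply H; auto. Qed.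

Lemma chain_valid l psi : (forall d, In d l -> sentence d) -> conseq (fun f => In f l) psi -> valid (chain l psi).
Proof.
  intros Hs H M HM _ s. apply sat_chain. intros Hd. apply H; auto.
  intros sg Hsg s'. apply (sat_coinc M HM sg s s'); auto.
  intros x Hx. rewrite (Hs sg Hsg x) in Hx. discriminate.
Qed.

Lemma filter_list (P : formula -> Prop) (D : list formula) : exists l, (forall f, In f l <-> In f D /\ P f).
Proof.
  induction D as [|d D [l IH]].
  - exists []; simpl; tauto.
  - destruct (classic (P d)) as [Hd|Hd].
    + exists (d :: l); simpl; intros f; rewrite IH; split; [intros [<-|[]]|intros [[<-|]]]; auto.
    + exists l; simpl; intros f; rewrite IH; split; [tauto|intros [[<-|] ?]]; tauto.
Qed.

Lemma freeb_bound_term x t : occurs_term x t = true -> x <= max_var_term t.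
Proof. induction t; simpl; intros H; try discriminate.
  - apply Nat.eqb_eq in H; lia.
  - auto.
  - apply orb_true_iff in H; destruct H; [specialize (IHt1 H)|specialize (IHt2 H)]; lia.
  - apply orb_true_iff in H; destruct H; [specialize (IHt1 H)|specialize (IHt2 H)]; lia.
Qed.

Lemma freeb_bound x phi : freeb x phi = true -> x <= max_var phi.
Proof. induction phi; simpl; intros H.
  - apply orb_true_iff in H; destruct H as [H|H]; apply freeb_bound_term in H; lia.
  - auto.
  - apply orb_true_iff in H; destruct H; [specialize (IHphi1 H)|specialize (IHphi2 H)]; lia.
  - apply andb_true_iff in H; destruct H as [_ H]; specialize (IHphi H); lia.
  - auto.
Qed.

Lemma freeb_in x phi : freeb x phi = true -> In x (free_vars phi).
Proof. intros H. unfold free_vars. apply filter_In; split; auto.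
  apply in_seq. apply freeb_bound in H. lia. Qed.
Section UP.
Variable I : Type.
Variable N : I -> prestructure.
Variable U : (I -> Prop) -> Prop.
Hypothesis UT : U (fun _ => True).
Hypothesis US : forall A B : I -> Prop, U A -> (forall x, A x -> B x) -> U B.
Hypothesis UI : forall A B : I -> Prop, U A -> U B -> U (fun x => A x /\ B x).
Hypothesis U0 : ~ U (fun _ => False).
Hypothesis UU : forall A : I -> Prop, U A \/ U (fun x => ~ A x).
Hypothesis NL : forall i, is_Lstructure (N i).

Definition T := forall i, dom (N i).
Definition req (f g : T) := U (fun i => f i = g i).

Lemma req_refl f : req f f.
Proof. apply (US _ _ UT); auto. Qed.
Lemma req_sym f g : req f g -> req g f.
Proof. intros H; apply (US _ _ H); auto. Qed.
Lemma req_trans f g h : req f g -> req g h -> req f h.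
Proof. intros H1 H2; apply (US _ _ (UI _ _ H1 H2)); intros x [-> ->]; auto. Qed.

Definition canon (f : T) : T := epsilon (inhabits f) (fun g => req g f).
Lemma canon_req f : req (canon f) f.
Proof. unfold canon. apply (epsilon_spec (inhabits f) (fun g => req g f)). exists f; apply req_refl. Qed.
Lemma canon_eq f g : req f g -> canon f = canon g.
Proof.
  intros H. unfold canon.
  assert (E : (fun h => req h f) = (fun h => req h g)).
  { apply functional_extensionality; intro h; apply propositional_extensionality; split; intros H'.
    - eapply req_trans; eauto.
    - eapply req_trans; eauto using req_sym. }
  rewrite E. f_equal. apply proof_irrelevance.
Qed.

Definition Q := {f : T | canon f = f}.
Definition cls (f : T) : Q := exist _ (canon f) (canon_eq (canon f) f (canon_req f)).
Lemma proj_cls f : req (proj1_sig (cls f)) f.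
Proof. apply canon_req. Qed.
Lemma Q_eq (a b : Q) : req (proj1_sig a) (proj1_sig b) -> a = b.
Proof.
  destruct a as [f Hf], b as [g Hg]; simpl; intros H.
  assert (f = g) by (rewrite <- Hf, <- Hg; apply canon_eq; auto). subst.
  f_equal; apply proof_irrelevance.
Qed.

Definition lift (s : nat -> Q) (i : I) : nat -> dom (N i) := fun x => proj1_sig (s x) i.

Definition UPs : prestructure := {|
  dom := Q;
  i_zero := cls (fun i => i_zero (N i));
  i_succ := fun a => cls (fun i => i_succ (N i) (proj1_sig a i));
  i_plus := fun a b => cls (fun i => i_plus (N i) (proj1_sig a i) (proj1_sig b i));
  i_times := fun a b => cls (fun i => i_times (N i) (proj1_sig a i) (proj1_sig b i));
  i_K := fun phi s => U (fun i => i_K (N i) phi (lift s i))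
|}.

Lemma eval_los s t : req (proj1_sig (eval UPs s t)) (fun i => eval (N i) (lift s i) t).
Proof.
  induction t; simpl.
  - apply req_refl.
  - apply proj_cls.
  - eapply req_trans; [apply proj_cls|]. apply (US _ _ IHt). intros i ->; auto.
  - eapply req_trans; [apply proj_cls|]. apply (US _ _ (UI _ _ IHt1 IHt2)). intros i [-> ->]; auto.
  - eapply req_trans; [apply proj_cls|]. apply (US _ _ (UI _ _ IHt1 IHt2)). intros i [-> ->]; auto.
Qed.

Lemma lift_upd s x d i : lift (upd s x d) i = upd (lift s i) x (proj1_sig d i).
Proof. apply functional_extensionality; intro v; unfold lift, upd. destruct (Nat.eqb v x); auto. Qed.

Lemma los phi : forall s, sat UPs phi s <-> U (fun i => sat (N i) phi (lift s i)).
Proof.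
  induction phi; intros s; simpl.
  - split; intros H.
    + pose proof (eval_los s t) as H1. pose proof (eval_los s t0) as H2. rewrite H in H1.
      apply (US _ _ (UI _ _ H1 H2)). intros i [<- <-]; auto.
    + apply Q_eq. eapply req_trans; [apply eval_los|]. eapply req_trans; [|apply req_sym, eval_los]. exact H.
  - rewrite IHphi. split; intros H.
    + destruct (UU (fun i => sat (N i) phi (lift s i))); tauto.
    + intros H'. apply U0. apply (US _ _ (UI _ _ H H')). tauto.
  - rewrite IHphi1, IHphi2. split; intros H.
    + destruct (UU (fun i => sat (N i) phi1 (lift s i))) as [H1|H1].
      * apply (US _ _ (H H1)); auto.
      * apply (US _ _ H1); tauto.
    + intros H1. apply (US _ _ (UI _ _ H H1)); tauto.
  - split; intros H.
    + destruct (UU (fun i => forall d, sat (N i) phi (upd (lift s i) n d))) as [H1|H1]; auto.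
      exfalso.
      set (w := fun i => epsilon (inhabits (i_zero (N i))) (fun e => ~ sat (N i) phi (upd (lift s i) n e))).
      specialize (H (cls w)). rewrite IHphi in H.
      apply U0. pose proof (proj_cls w) as Hw.
      apply (US _ _ (UI _ _ (UI _ _ H Hw) H1)). intros i [[Hs He] Hn].
      rewrite lift_upd, He in Hs.
      apply not_all_ex_not in Hn.
      apply (epsilon_spec (inhabits (i_zero (N i))) (fun e => ~ sat (N i) phi (upd (lift s i) n e)) Hn).
      exact Hs.
    + intros d. rewrite IHphi. apply (US _ _ H). intros i Hi. rewrite lift_upd. apply Hi.
  - tauto.
Qed.

Lemma UP_L : is_Lstructure UPs.
Proof.
  split; [|split]; simpl.
  - intros phi s s' H.
    assert (E : forall i, i_K (N i) phi (lift s i) <-> i_K (N i) phi (lift s' i)).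
    { intros i. destruct (NL i) as [Ha _]. apply Ha. intros x Hx; unfold lift; rewrite H; auto. }
    split; intros H'; apply (US _ _ H'); intros i Hi; apply E; auto.
  - intros phi psi s H. split; intros H'; apply (US _ _ H'); intros i Hi;
      destruct (NL i) as [_ [Hb _]]; [apply (Hb _ _ (lift s i) H)|apply <- (Hb _ _ (lift s i) H)]; auto.
  - intros phi x y s H. assert (E : forall i, lift (upd s x (s y)) i = upd (lift s i) x (lift s i y)).
    { intros i. rewrite lift_upd. reflexivity. }
    split; intros H'; apply (US _ _ H'); intros i Hi; rewrite ?E in *;
      destruct (NL i) as [_ [_ Hc]]; apply Hc; auto.
Qed.
End UP.

Lemma compact Sigma psi : conseq Sigma psi -> exists D, conseq (fun f => In f D /\ Sigma f) psi.
Proof.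
  intros Hc. apply NNPP; intro Hn.
  assert (Hx : forall D : list formula, exists p : {M : prestructure & nat -> dom M},
    is_Lstructure (projT1 p) /\ (forall sg, In sg D /\ Sigma sg -> forall s, sat (projT1 p) sg s)
    /\ ~ sat (projT1 p) psi (projT2 p)).
  { intros D. assert (H := fun h => Hn (ex_intro _ D h)). unfold conseq in H.
    apply not_all_ex_not in H as [M H]. apply imply_to_and in H as [HM H].
    apply imply_to_and in H as [HS H]. apply not_all_ex_not in H as [s H].
    exists (existT _ M s); simpl; auto. }
  destruct (UltraM.my_ultra formula) as [U [Ub [US [UI [U0 UU]]]]].
  assert (UT : U (fun _ => True)) by (apply (US _ _ (Ub nil)); auto).
  pose (Nf := fun D => proj1_sig (constructive_indefinite_description _ (Hx D))).
  pose (N := fun D => projT1 (Nf D)).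
  assert (HN : forall D, is_Lstructure (N D) /\ (forall sg, In sg D /\ Sigma sg -> forall s, sat (N D) sg s)
    /\ ~ sat (N D) psi (projT2 (Nf D))).
  { intros D. exact (proj2_sig (constructive_indefinite_description _ (Hx D))). }
  pose (s0 := fun x => cls _ N U UT US UI (fun D => projT2 (Nf D) x)).
  assert (HL : forall D, is_Lstructure (N D)) by (intros D; apply HN).
  specialize (Hc (UPs _ N U UT US UI) (UP_L _ N U UT US UI HL)).
  assert (HS : forall sg, Sigma sg -> forall s, sat (UPs _ N U UT US UI) sg s).
  { intros sg Hsg s. apply (los _ N U UT US UI U0 UU). apply (US _ _ (Ub [sg])).
    intros D HD. apply HN. split; auto. apply HD. left; auto. }
  specialize (Hc HS s0). apply (los _ N U UT US UI U0 UU) in Hc.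
  assert (Hag : forall l, U (fun D => forall x, In x l -> lift _ N U s0 D x = projT2 (Nf D) x)).
  { induction l as [|x l IH].
    - apply (US _ _ UT). intros D _ x [].
    - apply (US _ _ (UI _ _ IH (proj_cls _ N U UT US UI (fun D => projT2 (Nf D) x)))).
      intros D [H1 H2] y [<-|Hy]; auto. }
  apply U0. apply (US _ _ (UI _ _ Hc (Hag (free_vars psi)))). intros D [H1 H2].
  destruct (HN D) as [HLD [_ Hneg]]. apply Hneg.
  apply (sat_coinc _ HLD psi (lift _ N U s0 D)); auto.
  intros x Hfx. apply H2. apply freeb_in; auto.
Qed.

Lemma boxK Sigma
  (HK : forall phi, Sigma phi -> Sigma (K phi))
  (HE2 : E2_instances_in Sigma) M (HS : forall sg, Sigma sg -> forall s, sat M sg s) s psi :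
  forall l, (forall d, In d l -> Sigma d) -> sat M (K (chain l psi)) s -> sat M (K psi) s.
Proof.
  induction l as [|a l IH]; simpl; intros Hl H; auto.
  apply IH; auto.
  pose proof (close_elim _ _ _ s (HS _ (HE2 a (chain l psi)) s)) as E2. simpl in E2.
  apply E2; auto. exact (HS _ (HK a (Hl a (or_introl eq_refl))) s).
Qed.

Lemma mainK Sigma (Hsent : forall sg, Sigma sg -> sentence sg)
  (HK : forall phi, Sigma phi -> Sigma (K phi))
  (HE1 : E1_instances_in Sigma) (HE2 : E2_instances_in Sigma) psi :
  conseq Sigma psi -> conseq Sigma (K psi).
Proof.
  intros Hc. destruct (compact _ _ Hc) as [D HD]. destruct (filter_list Sigma D) as [l Hl].
  assert (HlS : forall d, In d l -> Sigma d) by (intros d Hd; apply Hl; auto).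
  assert (Hv : valid (chain l psi)).
  { apply chain_valid. intros d Hd; apply Hsent; auto.
    apply (conseq_mono _ _ _ (fun f H => proj2 (Hl f) H) HD). }
  intros M HM HS s. apply (boxK Sigma HK HE2 M HS s psi l HlS).
  exact (close_elim _ _ _ s (HS _ (HE1 _ Hv) s)).
Qed.

Theorem lemma12 (Sigma : formula -> Prop)
  (Hsent : forall sg, Sigma sg -> sentence sg)
  (HK : forall phi, Sigma phi -> Sigma (K phi))
  (HE1 : E1_instances_in Sigma)
  (HE2 : E2_instances_in Sigma) :
  forall (phi : formula) (s : nat -> nat),
    sat (M_Sigma Sigma) (closure (Imp (K phi) (K (K phi)))) s.
Proof.
  intros phi. unfold closure. apply (close_intro (M_Sigma Sigma)). intros s.
  change (conseq Sigma (inst phi s) -> conseq Sigma (K (inst phi s))).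
  apply (mainK Sigma Hsent HK HE1 HE2).
Qed.
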